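(* Let $n\ge 3$ (even or odd), $k\ge 3$ and $m\ge 2$ be integers. Then the strong metric dimension of $(C_n\square P_k)\square P_m$ is $2n$.
   Context: All graphs are finite and connected; $d(u,v)$ is the shortest-path distance. $C_n$ is the cycle on $n$ vertices and $P_k$ the path on $k$ vertices. The cartesian product $G\square H$ has vertex set $V(G)\times V(H)$, with $(g_1,h_1)$ adjacent to $(g_2,h_2)$ iff either $h_1=h_2$ and $g_1g_2\in E(G)$, or $g_1=g_2$ and $h_1h_2\in E(H)$. A set $Q\subseteq V(G)$ is a strong resolving set of $G$ if for any two distinct vertices $p,q$ of $G$ there is $s\in Q$ such that $p$ lies on some shortest $q$–$s$ path or $q$ lies on some shortest $p$–$s$ path. The strong metric dimension $\mathrm{sdim}(G)$ is the minimum size of a strong resolving set of $G$. *)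

(* Defs.v *)
From mathcomp Require Import all_boot.
Set Implicit Arguments. Unset Strict Implicit. Unset Printing Implicit Defensive.

(* A graph is given by a vertex finType T and a (symmetric, irreflexive) edge relation e. *)

Definition cycle_rel (n : nat) : rel 'I_n :=
  fun i j => (val j == (val i).+1 %% n) || (val i == (val j).+1 %% n).

Definition path_rel (k : nat) : rel 'I_k :=
  fun i j => ((val i).+1 == val j) || ((val j).+1 == val i).

Definition cart_rel (A B : finType) (eA : rel A) (eB : rel B) : rel (A * B) :=
  fun x y => ((x.2 == y.2) && eA x.1 y.1) || ((x.1 == y.1) && eB x.2 y.2).

Definition walk (T : finType) (e : rel T) (u v : T) (w : seq T) : Prop :=
  path e u w /\ last u w = v.

Definition on_shortest_path (T : finType) (e : rel T) (u v p : T) : Prop :=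
  exists w, [/\ walk e u v w, p \in u :: w &
                forall w', walk e u v w' -> size w <= size w'].

Definition strong_resolving (T : finType) (e : rel T) (Q : {set T}) : Prop :=
  forall p q : T, p != q ->
    exists2 s, s \in Q & on_shortest_path e q s p \/ on_shortest_path e p s q.

Definition is_sdim (T : finType) (e : rel T) (d : nat) : Prop :=
  (exists Q : {set T}, strong_resolving e Q /\ #|Q| = d) /\
  (forall Q : {set T}, strong_resolving e Q -> d <= #|Q|).

(* Main.v *)
Require Import Defs.
From mathcomp Require Import all_boot.
From mathcomp Require Import zify.
Set Implicit Arguments. Unset Strict Implicit. Unset Printing Implicit Defensive.

Definition lip (T : finType) (e : rel T) (d : T -> T -> nat) :=
  forall x y z, e y z -> d x z <= d x y + 1.
Definition reach (T : finType) (e : rel T) (d : T -> T -> nat) :=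
  forall x y, exists w, walk e x y w /\ size w = d x y.

Lemma lip_walk (T : finType) (e : rel T) d x y w :
  lip e d -> path e y w -> d x (last y w) <= d x y + size w.
Proof.
move=> L; elim: w y => [|z w IH] y /=; first by rewrite addn0.
case/andP=> eyz pw; have := IH z pw; have := L x y z eyz; lia.
Qed.

Lemma walk_cat (T : finType) (e : rel T) x y z w1 w2 :
  walk e x y w1 -> walk e y z w2 -> walk e x z (w1 ++ w2).
Proof. by case=> p1 l1 [p2 l2]; split; rewrite ?cat_path ?last_cat l1 ?p1. Qed.

Lemma osp_iff (T : finType) (e : rel T) d q s p :
  lip e d -> reach e d -> (forall x, d x x = 0) ->
  on_shortest_path e q s p <-> d q s = d q p + d p s.
Proof.
move=> L R d0.
have tri : d q s <= d q p + d p s.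
  have [w1 [W1 s1]] := R q p; have [w2 [W2 s2]] := R p s.
  have [P l] := walk_cat W1 W2.
  have := lip_walk q L P; rewrite l d0 size_cat s1 s2; lia.
split.
- case=> w [[pw lw] pin wmin].
  have [w' [W' s']] := R q s; have := wmin _ W'; rewrite s'.
  move: pin pw lw {wmin}; case/splitPl => w1 w2 l1.
  rewrite cat_path last_cat size_cat l1 => /andP[p1 p2] l2.
  have h1 := lip_walk q L p1; rewrite l1 d0 in h1.
  have h2 := lip_walk p L p2; rewrite l2 d0 in h2.
  lia.
- move=> E.
  have [w1 [W1 s1]] := R q p; have [w2 [W2 s2]] := R p s.
  exists (w1 ++ w2); split; first exact: walk_cat W1 W2.
  + case: W1 => _ <-; rewrite -cat_cons mem_cat mem_last //.
  + move=> w' [P l]; have := lip_walk q L P; rewrite l d0 size_cat s1 s2; lia.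
Qed.

Lemma walk_rev (T : finType) (e : rel T) x y w :
  (forall a b, e a b = e b a) -> walk e x y w ->
  walk e y x (rev (belast x w)) /\ size (rev (belast x w)) = size w.
Proof.
move=> S [P l]; rewrite size_rev size_belast; split => //; split.
  rewrite -l rev_path (@eq_path _ _ e) // => a b; exact: S.
case: w P l => [|z w] /= _ l; first by rewrite l.
by rewrite rev_cons last_rcons.
Qed.

Definition dcart (A B : finType) (dA : A -> A -> nat) (dB : B -> B -> nat)
  (x y : A * B) := dA x.1 y.1 + dB x.2 y.2.

Lemma lip_cart (A B : finType) eA eB (dA : A -> A -> nat) (dB : B -> B -> nat) :
  lip eA dA -> lip eB dB -> lip (cart_rel eA eB) (dcart dA dB).
Proof.
move=> LA LB [x1 x2] [y1 y2] [z1 z2]; rewrite /cart_rel /dcart /=.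
case/orP=> /andP[/eqP <- h]; [have := LA x1 _ _ h | have := LB x2 _ _ h]; lia.
Qed.

Lemma reach_cart (A B : finType) eA eB (dA : A -> A -> nat) (dB : B -> B -> nat) :
  reach eA dA -> reach eB dB -> reach (cart_rel eA eB) (dcart dA dB).
Proof.
move=> RA RB [x1 x2] [y1 y2].
have [wa [[pa la] sa]] := RA x1 y1; have [wb [[pb lb] sb]] := RB x2 y2.
exists (map (fun a => (a, x2)) wa ++ map (fun b => (y1, b)) wb).
split; last by rewrite size_cat !size_map sa sb.
apply: (@walk_cat _ _ _ (y1, x2)); split.
- elim: wa x1 pa {la sa} => //= a w IH x /andP[h p].
  by rewrite IH // /cart_rel /= eqxx h.
- by rewrite last_map la.
- elim: wb x2 pb {lb sb} => //= a w IH x /andP[h p].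
  by rewrite IH // /cart_rel /= eqxx h orbT.
- by rewrite last_map lb.
Qed.

Definition fd n (x y : 'I_n) : nat := if x <= y then y - x else y + n - x.
Definition dC n (x y : 'I_n) : nat := minn (fd x y) (fd y x).
Definition dP k (x y : 'I_k) : nat := (x - y) + (y - x).

Lemma modS_cases n (y : 'I_n) :
  (y.+1 %% n = y.+1 /\ y.+1 < n) \/ (y.+1 %% n = 0 /\ y.+1 = n).
Proof.
have := ltn_ord y; rewrite leq_eqVlt => /orP[/eqP E| lt].
  by right; rewrite E modnn.
by left; rewrite modn_small.
Qed.

Lemma lip_cycle n : lip (@cycle_rel n) (@dC n).
Proof.
move=> x y z; have := ltn_ord x; have := ltn_ord y; have := ltn_ord z.
rewrite /cycle_rel /dC /fd => ? ? ? /orP[/eqP E|/eqP E].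
  case: (modS_cases y) => [[F G]|[F G]]; rewrite F /= in E;
  repeat (case: ifP => [/idP ?|/negbT ?]); lia.
case: (modS_cases z) => [[F G]|[F G]]; rewrite F /= in E;
repeat (case: ifP => [/idP ?|/negbT ?]); lia.
Qed.

Lemma cycle_sym n (a b : 'I_n) : cycle_rel a b = cycle_rel b a.
Proof. by rewrite /cycle_rel orbC. Qed.

Lemma fwd n (x : 'I_n) d : exists w,
  path (@cycle_rel n) x w /\ size w = d /\ val (last x w) = (x + d) %% n.
Proof.
elim: d x => [|d IH] x.
  by exists [::]; rewrite addn0 modn_small.
have [w [P [S L]]] := IH (ordS x).
exists (ordS x :: w); split; first by rewrite /= P andbT /cycle_rel /= eqxx.
by rewrite /= S L /= modnDml addSnnS.
Qed.

Lemma reach_cycle n : reach (@cycle_rel n) (@dC n).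
Proof.
move=> x y; rewrite /dC.
have key : forall a b : 'I_n, exists w, walk (@cycle_rel n) a b w /\ size w = fd a b.
  move=> a b; have [w [P [S L]]] := fwd a (fd a b).
  exists w; split => //; split => //; apply: val_inj; rewrite L.
  have := ltn_ord a; have := ltn_ord b; rewrite /fd /= => ? ?; case: ifP => [/idP h|/negbT h].
    have -> : a + (b - a) = b by lia.
    by rewrite modn_small.
  have -> : a + (b + n - a) = b + n by lia.
  by rewrite modnDr modn_small.
case: (leqP (fd x y) (fd y x)) => h.
  by apply: key.
have [w [W S]] := key y x.
have [W' S'] := walk_rev (@cycle_sym n) W.
by eexists; split; [exact W' | rewrite S' S].
Qed.

Lemma dC0 n (x y : 'I_n) : dC x y = 0 -> x = y.
Proof.
move=> E; apply: val_inj => /=; move: E; have := ltn_ord x; have := ltn_ord y.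
rewrite /dC /fd => ? ?; repeat (case: ifP => [/idP ?|/negbT ?]); lia.
Qed.

Lemma dCxx n (x : 'I_n) : dC x x = 0.
Proof. by rewrite /dC /fd leqnn subnn. Qed.

Lemma dC_le n (x y : 'I_n) : dC x y <= n %/ 2.
Proof.
have := ltn_ord x; have := ltn_ord y.
rewrite /dC /fd => ? ?; repeat (case: ifP => [/idP ?|/negbT ?]); lia.
Qed.

Lemma lip_pathk k : lip (@path_rel k) (@dP k).
Proof.
move=> x y z; rewrite /path_rel /dP /= => /orP[/eqP E|/eqP E]; lia.
Qed.

Lemma path_sym k (a b : 'I_k) : path_rel a b = path_rel b a.
Proof. by rewrite /path_rel orbC. Qed.

Lemma pfwd k (x : 'I_k) d : x + d < k -> exists w,
  path (@path_rel k) x w /\ size w = d /\ val (last x w) = x + d.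
Proof.
elim: d x => [|d IH] x hx.
  by exists [::]; rewrite addn0.
have hy : x.+1 < k by lia.
have [w [P [S L]]] := IH (Ordinal hy) ltac:(rewrite /=; lia).
exists (Ordinal hy :: w); split; first by rewrite /= P andbT /path_rel /= eqxx.
by rewrite /= S L /= addSnnS.
Qed.

Lemma reach_pathk k : reach (@path_rel k) (@dP k).
Proof.
have key : forall a b : 'I_k, a <= b -> exists w, walk (@path_rel k) a b w /\ size w = dP a b.
  move=> a b ab; have [|w [P [S L]]] := @pfwd k a (b - a); first by have := ltn_ord b; lia.
  exists w; split; last by rewrite S /dP; lia.
  split => //; apply: val_inj; rewrite L /=; lia.
move=> x y; case: (leqP x y) => h; first exact: key.
have [w [W S]] := key y x (ltnW h).
have [W' S'] := walk_rev (@path_sym k) W.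
by eexists; split; [exact W' | rewrite S' S /dP addnC].
Qed.

Lemma dP0 k (x y : 'I_k) : dP x y = 0 -> x = y.
Proof. move=> E; apply: val_inj => /=; move: E; rewrite /dP; lia. Qed.

Lemma dPxx k (x : 'I_k) : dP x x = 0.
Proof. by rewrite /dP subnn. Qed.

Lemma dP_le k (x y : 'I_k) : dP x y <= k.-1.
Proof. have := ltn_ord x; have := ltn_ord y; rewrite /dP; lia. Qed.

Definition G3 n k m := cart_rel (cart_rel (@cycle_rel n) (@path_rel k)) (@path_rel m).
Definition D3 n k m := dcart (dcart (@dC n) (@dP k)) (@dP m).
Arguments G3 : clear implicits.
Arguments D3 : clear implicits.

Lemma osp3 n k m q s p :
  on_shortest_path (G3 n k m) q s p <-> D3 n k m q s = D3 n k m q p + D3 n k m p s.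
Proof.
apply: osp_iff.
- exact: lip_cart (lip_cart (@lip_cycle n) (@lip_pathk k)) (@lip_pathk m).
- exact: reach_cart (reach_cart (@reach_cycle n) (@reach_pathk k)) (@reach_pathk m).
- by case=> [[a b] c]; rewrite /D3 /dcart /= dCxx !dPxx.
Qed.

Lemma D3_0 n k m (x y : ('I_n * 'I_k) * 'I_m) : D3 n k m x y = 0 -> x = y.
Proof.
case: x y => [[a b] c] [[a' b'] c']; rewrite /D3 /dcart /= => E.
have E1 : dC a a' = 0 by lia.
have E2 : dP b b' = 0 by lia.
have E3 : dP c c' = 0 by lia.
by rewrite (dC0 E1) (dP0 E2) (dP0 E3).
Qed.

Lemma D3_le n k m (x y : ('I_n * 'I_k) * 'I_m) : D3 n k m x y <= n %/ 2 + k.-1 + m.-1.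
Proof.
rewrite /D3 /dcart /=; have := dC_le x.1.1 y.1.1; have := dP_le x.1.2 y.1.2;
have := dP_le x.2 y.2; lia.
Qed.

Lemma shP n (a : 'I_n) : (if a + n %/ 2 < n then a + n %/ 2 else a + n %/ 2 - n) < n.
Proof. have := ltn_ord a; case: ifP => [/idP|/negbT]; lia. Qed.

Definition sh n (a : 'I_n) : 'I_n := Ordinal (shP a).

Lemma sh_spec n (a : 'I_n) : (val (sh a) = a + n %/ 2 /\ a + n %/ 2 < n) \/
   (val (sh a) = a + n %/ 2 - n /\ n <= a + n %/ 2).
Proof. rewrite /=; case: ifP => [/idP h|/negbT h]; [left|right]; lia. Qed.

Lemma dC_sh n (a : 'I_n) : dC a (sh a) = n %/ 2 /\ dC (sh a) a = n %/ 2.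
Proof.
have := sh_spec a; have := ltn_ord a; have := ltn_ord (sh a).
move: (sh a) => s /= ? ? Hs.
rewrite /dC /fd; split; repeat (case: ifP => [/idP ?|/negbT ?]); lia.
Qed.

Lemma sh_inj n : injective (@sh n).
Proof.
move=> a b E; apply: val_inj => /=; have := congr1 val E.
have := sh_spec a; have := sh_spec b; have := ltn_ord a; have := ltn_ord b.
move: (sh a) (sh b) => sa sb /=; lia.
Qed.

Theorem theorem3p6 (n k m : nat) :
  3 <= n -> 3 <= k -> 2 <= m ->
  is_sdim (cart_rel (cart_rel (@cycle_rel n) (@path_rel k)) (@path_rel m)) (2 * n).
Proof.
move=> hn hk hm.
have k0 : 0 < k by lia. have kt : k.-1 < k by lia.
have m0 : 0 < m by lia. have mt : m.-1 < m by lia.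
pose K0 : 'I_k := Ordinal k0. pose Kt : 'I_k := Ordinal kt.
pose M0 : 'I_m := Ordinal m0. pose Mt : 'I_m := Ordinal mt.
have M0t : M0 != Mt by apply/eqP => /(congr1 val) /=; lia.
have K0t : K0 != Kt by apply/eqP => /(congr1 val) /=; lia.
have osp := @osp3 n k m.
split.
- pose sig (i : 'I_n * bool) : ('I_n * 'I_k) * 'I_m := ((i.1, K0), if i.2 then M0 else Mt).
  have sig_inj : injective sig.
    case=> a b [a' b'] E.
    have E1 := congr1 (fun x => x.1.1) E; have E3 := congr1 snd E; simpl in E1, E3.
    rewrite E1; case: b b' E3 {E} => [] [] // /(congr1 val) /=; lia.
  exists [set sig i | i : 'I_n * bool]; split;
    last by rewrite card_imset // card_prod card_ord card_bool mulnC.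
  move=> p q _.
  wlog H: p q / q.1.2 <= p.1.2.
    move=> W; case: (leqP q.1.2 p.1.2) => h; first exact: W.
    have [s sQ o] := W q p (ltnW h); exists s => //; tauto.
  exists (sig (q.1.1, q.2 <= p.2)); first exact: imset_f.
  right; apply/osp.
  case: p q H => [[p1 p2] p3] [[q1 q2] q3] /= H.
  rewrite /D3 /dcart /= dCxx /dP /=.
  have := ltn_ord p3; have := ltn_ord q3.
  case: ifP => [/idP ?|/negbT ?] /=; lia.
- move=> Q HQ.
  pose u (i : 'I_n * bool) : ('I_n * 'I_k) * 'I_m := ((i.1, K0), if i.2 then M0 else Mt).
  pose v (i : 'I_n * bool) : ('I_n * 'I_k) * 'I_m := ((sh i.1, Kt), if i.2 then Mt else M0).
  have key : forall i, (u i \in Q) || (v i \in Q).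
    move=> i.
    have neq : u i != v i.
      by apply/eqP => /(congr1 (fun x => val x.1.2)) /=; lia.
    have [Duv Dvu] : D3 n k m (u i) (v i) = n %/ 2 + k.-1 + m.-1 /\
                     D3 n k m (v i) (u i) = n %/ 2 + k.-1 + m.-1.
      case: i {neq} => a b; rewrite /D3 /dcart /=; have [h1 h2] := dC_sh a.
      rewrite h1 h2 /dP /=; case: b => /=; split; lia.
    have [s sQ [o|o]] := HQ _ _ neq; move/osp: o => o.
    + have := D3_le (v i) s => ?; have E : D3 n k m (u i) s = 0 by lia.
      by rewrite -(D3_0 E) in sQ; rewrite sQ.
    + have := D3_le (u i) s => ?; have E : D3 n k m (v i) s = 0 by lia.
      by rewrite -(D3_0 E) in sQ; rewrite sQ orbT.
  pose phi i := if u i \in Q then u i else v i.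
  have uu : forall i j, u i = u j -> i = j.
    move=> [a b] [a' b'] E.
    have E1 := congr1 (fun x => x.1.1) E; have E3 := congr1 snd E; simpl in E1, E3.
    rewrite E1; case: b b' E3 {E} => [] [] // /(congr1 val) /= ?; exfalso; lia.
  have vv : forall i j, v i = v j -> i = j.
    move=> [a b] [a' b'] E.
    have E1 := congr1 (fun x => x.1.1) E; have E3 := congr1 snd E; simpl in E1, E3.
    rewrite (sh_inj E1); case: b b' E3 {E} => [] [] // /(congr1 val) /= ?; exfalso; lia.
  have uv : forall i j, u i <> v j.
    by move=> i j /(congr1 (fun x => val x.1.2)) /=; lia.
  have phi_inj : injective phi.
    move=> i j; rewrite /phi.
    case: ifP => _; case: ifP => _ E; [exact: uu | by case: (uv _ _ E)
      | by case: (uv _ _ (esym E)) | exact: vv].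
  have sub : [set phi i | i : 'I_n * bool] \subset Q.
    apply/subsetP => x /imsetP [i _ ->]; rewrite /phi; case: ifP => // nu.
    by have := key i; rewrite nu.
  have := subset_leq_card sub.
  by rewrite card_imset // card_prod card_ord card_bool mulnC.
Qed.
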